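(* For every $m\ge1$, $0\le s\le m$ and every $j\in\{1,\dots,m\}$, the function $e^{(m-1)\lambda_j}\,\tilde G_s(m,\{\lambda_l\}|\{\xi_k\})$, viewed as a function of $\lambda_j$ with all other variables fixed (generic), is a polynomial in $e^{2\lambda_j}$ of degree at most $m-1$.
   Context: Fix $\zeta\in(0,\pi)$. For integers $m\ge1$, $0\le s\le m$, set $\epsilon_j=-\tfrac12$ for $j\le s$ and $\epsilon_j=+\tfrac12$ for $j>s$ ($\epsilon_j$ attached to $\lambda_j$). Define $$G_s(m,\{\lambda_j\}|\{\xi_k\})=\frac{1}{s!(m-s)!}\sum_{\sigma\in S_m}(-1)^{[\sigma]}\prod_{1\le k<j\le m}\frac{\sinh(\lambda_{\sigma(j)}-\xi_k+i\epsilon_{\sigma(j)}\zeta)\,\sinh(\lambda_{\sigma(k)}-\xi_j-i\epsilon_{\sigma(k)}\zeta)}{\sinh(\lambda_{\sigma(j)}-\lambda_{\sigma(k)}+i(\epsilon_{\sigma(j)}+\epsilon_{\sigma(k)})\zeta)}$$ ($(-1)^{[\sigma]}$ the sign of $\sigma$), and define $\tilde G_s$ by $$G_s(m,\{\lambda_j\}|\{\xi_k\})=\frac{1}{s!(m-s)!}\prod_{1\le k<j\le m}\frac{\sinh(\lambda_j-\lambda_k)}{\sinh(\lambda_j-\lambda_k+i(\epsilon_j+\epsilon_k)\zeta)\,\sinh(\lambda_j-\lambda_k-i(\epsilon_j+\epsilon_k)\zeta)}\;\tilde G_s(m,\{\lambda_j\}|\{\xi_k\}),$$ understood as an identity of meromorphic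 functions (removable singularities extended by continuity). *)

(* Defs.v *)
From HB Require Import structures.
From mathcomp Require Import all_boot all_order all_algebra all_fingroup.
From mathcomp Require Import all_classical all_reals all_analysis.
From mathcomp Require Import complex.
Set Implicit Arguments. Unset Strict Implicit. Unset Printing Implicit Defensive.
Import Order.TTheory GRing.Theory Num.Theory.
Local Open Scope ring_scope.
Local Open Scope complex_scope.

Section Defs.
Variable R : realType.
Local Notation C := R[i].

Definition cexp (z : C) : C :=
  (expR (complex.Re z))%:C * ((cos (complex.Im z)) +i* (sin (complex.Im z))).

Definition csinh (z : C) : C := (cexp z - cexp (- z)) / 2.

Definition iR (x : R) : C := (0 +i* x).

(* epsilon_j (0-based index j) : -1/2 if j+1 <= s, +1/2 otherwise *)
Definition eps (s : nat) (m : nat) (j : 'I_m) : R :=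
  if (j < s)%N then - (1/2) else 1/2.

Definition Gs (zeta : R) (m s : nat) (lam xi : 'I_m -> C) : C :=
  ((s`! * (m - s)`!)%:R)^-1 *
  \sum_(sigma : 'S_m) (-1) ^+ (odd_perm sigma) *
    \prod_(k < m) \prod_(j < m | (k < j)%N)
      (csinh (lam (sigma j) - xi k + iR (eps s (sigma j) * zeta)) *
       csinh (lam (sigma k) - xi j - iR (eps s (sigma k) * zeta)) /
       csinh (lam (sigma j) - lam (sigma k)
              + iR ((eps s (sigma j) + eps s (sigma k)) * zeta))).

(* Gtilde_s obtained by solving the defining identity for Gtilde
   (valid where all the sinh factors involved are nonzero) *)
Definition Gtilde (zeta : R) (m s : nat) (lam xi : 'I_m -> C) : C :=
  (s`! * (m - s)`!)%:R * Gs zeta s lam xi *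
  \prod_(k < m) \prod_(j < m | (k < j)%N)
     (csinh (lam j - lam k + iR ((eps s j + eps s k) * zeta)) *
      csinh (lam j - lam k - iR ((eps s j + eps s k) * zeta)) /
      csinh (lam j - lam k)).

(* the points where all denominators (of G_s and of the defining
   identity of Gtilde_s) are nonzero *)
Definition nonsingular (zeta : R) (m s : nat) (lam : 'I_m -> C) : Prop :=
  forall a b : 'I_m, a != b ->
    csinh (lam b - lam a) != 0 /\
    csinh (lam b - lam a + iR ((eps s b + eps s a) * zeta)) != 0.

End Defs.

(* Main.v *)
Require Import Defs.
From HB Require Import structures.
From mathcomp Require Import all_boot all_order all_algebra all_fingroup.
From mathcomp Require Import all_classical all_reals all_analysis.
From mathcomp Require Import complex.
From mathcomp Require Import ring zify.
Import Order.TTheory GRing.Theory Num.Theory.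
Local Open Scope ring_scope.

Section Basic.
Variable R : realType.
Local Notation C := R[i].

Lemma cexpD (a b : C) : cexp (a + b) = cexp a * cexp b.
Proof.
case: a => a1 a2; case: b => b1 b2.
rewrite /cexp /= expRD cosD sinD.
apply/eqP; rewrite eq_complex /=; apply/andP; split; apply/eqP; ring.
Qed.

Lemma cexp0 : cexp (0 : C) = 1.
Proof.
rewrite /cexp /= expR0 cos0 sin0 mul1r.
by apply/eqP; rewrite eq_complex /= !eqxx.
Qed.

Lemma cexpNK (a : C) : cexp (- a) * cexp a = 1.
Proof. by rewrite -cexpD addNr cexp0. Qed.

Lemma cexp_neq0 (a : C) : cexp a != 0.
Proof.
apply/eqP => H; have := cexpNK a; rewrite H mulr0 => /eqP; by rewrite eq_sym oner_eq0.
Qed.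

Lemma cexpN (a : C) : cexp (- a) = (cexp a)^-1.
Proof. by apply: (mulIf (cexp_neq0 a)); rewrite cexpNK mulVf // cexp_neq0. Qed.

Lemma cexp_nat (n : nat) (z : C) : cexp (n%:R * z) = cexp z ^+ n.
Proof.
elim: n => [|n IH]; first by rewrite mul0r cexp0 expr0.
by rewrite -addn1 natrD mulrDl mul1r cexpD IH exprD expr1.
Qed.

Lemma two_neq0 : (2 : C) != 0.
Proof. by rewrite pnatr_eq0. Qed.

Lemma csinhN (w : C) : csinh (- w) = - csinh w.
Proof. by rewrite /csinh opprK; field. Qed.

Lemma csinh0 : csinh (0 : C) = 0.
Proof. by rewrite /csinh oppr0 subrr mul0r. Qed.




Lemma csinh_rep (z c : C) :
  csinh (z + c) = cexp (- z) * ((cexp c / 2) * (cexp (2 * z) - cexp (- (2 * c)))).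
Proof.
have H1 : cexp (- z) * cexp c * cexp (2 * z) = cexp (z + c).
  by rewrite -!cexpD; congr cexp; ring.
have H2 : cexp (- z) * cexp c * cexp (- (2 * c)) = cexp (- (z + c)).
  by rewrite -!cexpD; congr cexp; ring.
by rewrite /csinh -H1 -H2; field.
Qed.

Lemma csinh_neq0 (a b : C) : csinh (b - a) != 0 -> cexp (2 * b) != cexp (2 * a).
Proof.
apply: contra => /eqP H.
have H3 : cexp (2 * (b - a)) = 1.
  by rewrite mulrBr cexpD cexpN H mulfV // cexp_neq0.
have : cexp (b - a) ^+ 2 = 1 by rewrite -cexp_nat.
move=> H4.
rewrite /csinh cexpN.
have Hn := cexp_neq0 (b - a).
apply/eqP; apply: (mulIf (cexp_neq0 (b - a))); rewrite mul0r.
rewrite mulrAC mulrBl mulVf // -expr2 H4 subrr mul0r //.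
Qed.

End Basic.
Lemma big_pair_split (T : Type) (idx : T) (op : Monoid.com_law idx) (m : nat)
  (p : 'I_m) (f : 'I_m -> 'I_m -> T) :
  \big[op/idx]_(k < m) \big[op/idx]_(l < m | (k < l)%N) f k l =
  op (\big[op/idx]_(k < m | k != p) \big[op/idx]_(l < m | (k < l)%N && (l != p)) f k l)
     (\big[op/idx]_(a < m | a != p) (if (a < p)%N then f a p else f p a)).
Proof.
rewrite (bigD1 p) //=.
have E1 : forall k : 'I_m, \big[op/idx]_(l < m | (k < l)%N) f k l =
   op (\big[op/idx]_(l < m | (k < l)%N && (l != p)) f k l)
      (if (k < p)%N then f k p else idx).
  move=> k; rewrite (bigID (fun l : 'I_m => l == p)) /= Monoid.mulmC; congr (op _ _).
  case: ifP => hkp.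
    by apply: big_pred1 => l /=; case: eqP => [->|]; rewrite ?hkp ?andbF ?andbT.
  by apply: big_pred0 => l /=; case: eqP => [->|]; rewrite ?hkp ?andbF.
rewrite (eq_bigr _ (fun k _ => E1 k)) big_split /=.
have E2 : \big[op/idx]_(l < m | (p < l)%N) f p l =
  \big[op/idx]_(a < m | a != p) (if (a < p)%N then idx else f p a).
  rewrite big_mkcond [RHS]big_mkcond; apply: eq_bigr => a _.
  case: (ltngtP a p) => h.
  - by case: (_ != _).
  - by rewrite -val_eqE /= (gtn_eqF h).
  - by rewrite (val_inj h) eqxx.
rewrite E2 Monoid.mulmCA; congr (op _ _).
transitivity (\big[op/idx]_(a < m | a != p)
   op (if (a < p)%N then idx else f p a) (if (a < p)%N then f a p else idx)).
  by rewrite big_split.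
apply: eq_bigr => a _.
by case: ifP => _; rewrite ?Monoid.mul1m ?Monoid.mulm1.
Qed.

Lemma count_pairs m (p : 'I_m) :
  (\sum_(k < m) \sum_(l < m | (k < l)%N) ((l == p) + (k == p)))%N = m.-1.
Proof.
rewrite (@big_pair_split _ 0%N addn _ p) /=.
rewrite big1 ?add0n; last first.
  move=> k hk; apply: big1 => l /andP [_ hl].
  by rewrite (negbTE hk) (negbTE hl).
rewrite (eq_bigr (fun _ => 1%N)); last first.
  by move=> a ha; rewrite (negbTE ha) eqxx; case: ifP.
by rewrite sum1_card cardC1 card_ord.
Qed.

Lemma pair_neq m (a b : 'I_m) : (a < b)%N || (b < a)%N -> ((b, a) == (a, b)) = false.
Proof.
move=> h; apply/negbTE; rewrite xpair_eqE negb_and -!val_eqE /=.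
by case/orP: h => h; rewrite ?(gtn_eqF h) ?(ltn_eqF h).
Qed.

Lemma big_pairs_perm (T : Type) (idx : T) (op : Monoid.com_law idx) (m : nat)
  (f : 'I_m -> 'I_m -> T) (fsym : forall a b, f a b = f b a) (s : 'S_m) :
  \big[op/idx]_(k < m) \big[op/idx]_(l < m | (k < l)%N) f (s k) (s l) =
  \big[op/idx]_(k < m) \big[op/idx]_(l < m | (k < l)%N) f k l.
Proof.
rewrite !pair_big_dep_idem ?Monoid.mul1m //.
pose h (q : 'I_m * 'I_m) :=
  if (s q.1 < s q.2)%N then (s q.1, s q.2) else (s q.2, s q.1).
pose h' (q : 'I_m * 'I_m) :=
  if ((s^-1)%g q.1 < (s^-1)%g q.2)%N then ((s^-1)%g q.1, (s^-1)%g q.2)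
  else ((s^-1)%g q.2, (s^-1)%g q.1).
symmetry; rewrite (reindex_onto h h') /=; last first.
  case=> a b /= hab; rewrite /h /h' /=.
  case: (ltngtP (s^-1%g a) (s^-1%g b)) => H /=; rewrite !permKV ?hab //.
    by rewrite ltnNge (ltnW hab).
  have : a = b by apply: (perm_inj (s := s^-1%g)); apply: val_inj.
  by move=> E; move: hab; rewrite E ltnn.
apply: eq_big.
  case=> a b /=; rewrite /h /h' /=.
  case: (ltngtP (s a) (s b)) => hs /=; rewrite !permK;
  case: (ltngtP a b) => hab; rewrite /= ?eqxx ?pair_neq ?hab ?orbT ?andbF ?andbT //;
  try (by move: hs; rewrite (val_inj hab) ltnn).
  have E : a = b by apply: (@perm_inj _ s); exact: val_inj.
  by move: hab; rewrite E ltnn.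
case=> a b _; rewrite /h /=; case: ifP => _ //=; exact: fsym.
Qed.

Section Main.
Variable R : realType.
Local Notation C := R[i].
Variables (zeta : R) (m s : nat) (j : 'I_m) (lam xi : 'I_m -> C).

Definition lamz (z : C) := fun l : 'I_m => if l == j then z else lam l.

Definition Lp (c : C) : {poly C} :=
  (cexp c / 2)%:P * ('X - (cexp (- (2 * c)))%:P).

Lemma Lp_eval z c : csinh (z + c) = cexp (- z) * (Lp c).[cexp (2 * z)].
Proof. by rewrite csinh_rep /Lp !hornerE. Qed.

Definition shp (b : 'I_m) (c : C) : {poly C} :=
  if b == j then Lp c else (csinh (lam b + c))%:P.

Lemma shp_eval z b c :
  csinh (lamz z b + c) = cexp (- z) ^+ (b == j) * (shp b c).[cexp (2 * z)].
Proof.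
rewrite /lamz /shp; case: eqP => _; first by rewrite expr1 Lp_eval.
by rewrite expr0 mul1r hornerC.
Qed.

Definition shd (a b : 'I_m) (c : C) : {poly C} :=
  if b == j then Lp (- lam a + c)
  else if a == j then - Lp (- (lam b + c))
  else (csinh (lam b - lam a + c))%:P.

Lemma shd_eval z a b c : a != b ->
  csinh (lamz z b - lamz z a + c) =
  cexp (- z) ^+ ((b == j) + (a == j)) * (shd a b c).[cexp (2 * z)].
Proof.
move=> hab; rewrite /lamz /shd.
case: (eqVneq b j) => [hb|hb].
  have ha : (a == j) = false by apply/negbTE; rewrite -hb.
  by rewrite ha /= expr1 -Lp_eval addrA.
case: (eqVneq a j) => [ha|ha] /=.
  rewrite expr1 hornerN mulrN -Lp_eval -csinhN; congr csinh; ring.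
by rewrite expr0 mul1r hornerC.
Qed.


Lemma prod_expr (c : C) (w : 'I_m -> 'I_m -> nat) :
  \prod_(k < m) \prod_(l < m | (k < l)%N) c ^+ (w k l) =
  c ^+ (\sum_(k < m) \sum_(l < m | (k < l)%N) w k l).
Proof.
rewrite (big_morph _ (exprD c) (expr0 c)); apply: eq_bigr => k _.
by rewrite (big_morph _ (exprD c) (expr0 c)).
Qed.

Lemma perm_eq_inv (sg : 'S_m) (x y : 'I_m) : (sg x == y) = (x == (sg^-1)%g y).
Proof. by rewrite -{1}(permKV sg y) (inj_eq (@perm_inj _ sg)). Qed.

Lemma count2 (sg : 'S_m) :
  (\sum_(k < m) \sum_(l < m | (k < l)%N) (2 * ((sg l == j) + (sg k == j))))%N
   = (2 * m.-1)%N.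
Proof.
rewrite -(@count_pairs m ((sg^-1)%g j)) big_distrr /=; apply: eq_bigr => k _.
rewrite big_distrr /=; apply: eq_bigr => l _.
by rewrite !perm_eq_inv.
Qed.

Definition nfac (z : C) (sg : 'S_m) (k l : 'I_m) : C :=
  csinh (lamz z (sg l) - xi k + iR (eps R s (sg l) * zeta)) *
  csinh (lamz z (sg k) - xi l - iR (eps R s (sg k) * zeta)) *
  csinh (lamz z (sg l) - lamz z (sg k) - iR ((eps R s (sg l) + eps R s (sg k)) * zeta)).

Definition Tz z sg := \prod_(k < m) \prod_(l < m | (k < l)%N) nfac z sg k l.

Definition qfac (sg : 'S_m) (k l : 'I_m) : {poly C} :=
  shp (sg l) (- xi k + iR (eps R s (sg l) * zeta)) *
  shp (sg k) (- xi l - iR (eps R s (sg k) * zeta)) *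
  shd (sg k) (sg l) (- iR ((eps R s (sg l) + eps R s (sg k)) * zeta)).

Definition Qp sg := \prod_(k < m) \prod_(l < m | (k < l)%N) qfac sg k l.

Lemma nfac_eval z sg (k l : 'I_m) : (k < l)%N ->
  nfac z sg k l = cexp (- z) ^+ (2 * ((sg l == j) + (sg k == j)))
                  * (qfac sg k l).[cexp (2 * z)].
Proof.
move=> hkl.
have hne : sg k != sg l.
  by rewrite (inj_eq (@perm_inj _ sg)) -val_eqE /= (ltn_eqF hkl).
rewrite /nfac -(addrA (lamz z (sg l))) -(addrA (lamz z (sg k))).
rewrite shp_eval shp_eval shd_eval // /qfac !hornerM.
rewrite mul2n -addnn !exprD; ring.
Qed.

Lemma Tz_eval z sg :
  Tz z sg = cexp (- z) ^+ (2 * m.-1) * (Qp sg).[cexp (2 * z)].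
Proof.
have -> : Tz z sg = \prod_(k < m)
   (\prod_(l < m | (k < l)%N) cexp (- z) ^+ (2 * ((sg l == j) + (sg k == j)))
    * \prod_(l < m | (k < l)%N) (qfac sg k l).[cexp (2 * z)]).
  apply: eq_bigr => k _; rewrite -big_split /=; apply: eq_bigr => l hl.
  exact: nfac_eval.
rewrite big_split /= prod_expr count2; congr (_ * _).
rewrite /Qp horner_prod; apply: eq_bigr => k _; by rewrite horner_prod.
Qed.

Definition Vf z (k l : 'I_m) := csinh (lamz z l - lamz z k).

Definition Sf z (a b : 'I_m) :=
  csinh (lamz z b - lamz z a + iR ((eps R s b + eps R s a) * zeta)) *
  csinh (lamz z b - lamz z a - iR ((eps R s b + eps R s a) * zeta)).

Lemma Sf_sym z a b : Sf z a b = Sf z b a.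
Proof.
rewrite /Sf (addrC (eps R s a)).
set E := iR _.
have h1 : lamz z a - lamz z b + E = - (lamz z b - lamz z a - E) by ring.
have h2 : lamz z a - lamz z b - E = - (lamz z b - lamz z a + E) by ring.
by rewrite h1 h2 !csinhN mulrNN mulrC.
Qed.

Lemma fact_neq0 : ((s`! * (m - s)`!)%:R : C) != 0.
Proof. by rewrite pnatr_eq0 muln_eq0 negb_or -!lt0n !fact_gt0. Qed.

Lemma Gtilde_eq z : nonsingular zeta s (lamz z) ->
  Gtilde zeta s (lamz z) xi =
  (\sum_(sg : 'S_m) (-1) ^+ (odd_perm sg) * Tz z sg) /
  \prod_(k < m) \prod_(l < m | (k < l)%N) Vf z k l.
Proof.
move=> ns.
rewrite /Gtilde /Gs mulrA mulfV ?fact_neq0 // mul1r.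
have -> : \prod_(k < m) \prod_(l < m | (k < l)%N)
     (csinh (lamz z l - lamz z k + iR ((eps R s l + eps R s k) * zeta)) *
      csinh (lamz z l - lamz z k - iR ((eps R s l + eps R s k) * zeta)) /
      csinh (lamz z l - lamz z k)) =
   (\prod_(k < m) \prod_(l < m | (k < l)%N) Sf z k l) /
   (\prod_(k < m) \prod_(l < m | (k < l)%N) Vf z k l).
  transitivity (\prod_(k < m) (\prod_(l < m | (k < l)%N) Sf z k l *
                 \prod_(l < m | (k < l)%N) (Vf z k l)^-1)).
    by apply: eq_bigr => k _; rewrite -big_split.
  rewrite big_split /= -prodfV; congr (_ * _).
  by apply: eq_bigr => k _; rewrite prodfV.
rewrite mulrA; congr (_ * _); rewrite mulr_suml; apply: eq_bigr => sg _.
rewrite -mulrA; congr (_ * _).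
rewrite -(@big_pairs_perm C 1 *%R m (Sf z) (Sf_sym z) sg).
rewrite -big_split /=; apply: eq_bigr => k _.
rewrite -big_split /=; apply: eq_bigr => l hkl.
have hne : sg k != sg l.
  by rewrite (inj_eq (@perm_inj _ sg)) -val_eqE /= (ltn_eqF hkl).
have [_ hden] := ns _ _ hne.
rewrite /nfac /Sf; field; exact: hden.
Qed.

Definition Wp := \prod_(k < m) \prod_(l < m | (k < l)%N) shd k l 0.

Lemma V_eval z :
  \prod_(k < m) \prod_(l < m | (k < l)%N) Vf z k l =
  cexp (- z) ^+ m.-1 * Wp.[cexp (2 * z)].
Proof.
have -> : \prod_(k < m) \prod_(l < m | (k < l)%N) Vf z k l = \prod_(k < m)
   (\prod_(l < m | (k < l)%N) cexp (- z) ^+ ((l == j) + (k == j))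
    * \prod_(l < m | (k < l)%N) (shd k l 0).[cexp (2 * z)]).
  apply: eq_bigr => k _; rewrite -big_split /=; apply: eq_bigr => l hl.
  have hne : k != l by rewrite -val_eqE /= (ltn_eqF hl).
  by rewrite /Vf -[lamz z l - lamz z k]addr0 shd_eval.
rewrite big_split /= prod_expr count_pairs; congr (_ * _).
rewrite /Wp horner_prod; apply: eq_bigr => k _; by rewrite horner_prod.
Qed.

Definition Dp : {poly C} := \prod_(a < m | a != j) ('X - (cexp (2 * lam a))%:P).

Definition ka (a : 'I_m) : C :=
  if (a < j)%N then cexp (- lam a + 0) / 2 else - (cexp (- (lam a + 0)) / 2).

Lemma Wp_struct : exists K : C, Wp = K%:P * Dp.
Proof.
rewrite /Wp (@big_pair_split _ 1 *%R m j).
exists ((\prod_(k < m | k != j) \prod_(l < m | (k < l)%N && (l != j))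
          csinh (lam l - lam k + 0)) * \prod_(a < m | a != j) ka a).
rewrite polyCM -mulrA; congr (_ * _).
  rewrite rmorph_prod; apply: eq_bigr => k hk.
  rewrite rmorph_prod; apply: eq_bigr => l /andP [_ hl].
  by rewrite /shd (negbTE hl) (negbTE hk).
rewrite rmorph_prod /Dp -big_split /=; apply: eq_bigr => a ha.
rewrite /ka /shd eqxx (negbTE ha) /Lp.
case: ifP => _.
  by congr (_ * ('X - _%:P)); congr cexp; ring.
by rewrite polyCN mulNr; congr (- (_ * ('X - _%:P))); congr cexp; ring.
Qed.

Lemma iR0 : iR (0 : R) = 0.
Proof. by apply/eqP; rewrite eq_complex /= !eqxx. Qed.

Lemma antisym (a : 'I_m) : a != j ->
  \sum_(sg : 'S_m) (-1) ^+ (odd_perm sg) * Tz (lam a) sg = 0.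
Proof.
move=> ha.
have La : lamz (lam a) a = lam a by rewrite /lamz (negbTE ha).
have Lj : lamz (lam a) j = lam a by rewrite /lamz eqxx.
case: (boolP ((a < s)%N == (j < s)%N)) => hE.
  set tau := tperm a j.
  have HL : forall b, lamz (lam a) (tau b) = lamz (lam a) b.
    by move=> b; rewrite /tau; case: tpermP => [->|->|//]; rewrite La Lj.
  have HE : forall b, eps R s (tau b) = eps R s b.
    move=> b; rewrite /tau; case: tpermP => [->|->|//]; rewrite /eps (eqP hE) //.
  have HT : forall sg, Tz (lam a) (sg * tau)%g = Tz (lam a) sg.
    move=> sg; rewrite /Tz; apply: eq_bigr => k _; apply: eq_bigr => l _.
    by rewrite /nfac !permM !HL !HE.
  set S := \sum_(sg : 'S_m) _.
  have hS : S = - S.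
    rewrite {1}/S (reindex_inj (mulIg tau)) /= -sumrN; apply: eq_bigr => sg _.
    rewrite HT odd_permM odd_tperm ha.
    by case: (odd_perm sg) => /=; rewrite ?expr0 ?expr1; ring.
  apply/eqP; move/eqP: hS; rewrite -subr_eq0 opprK -mulr2n mulrn_eq0 /=.
  done.
have hsum : eps R s j + eps R s a = 0.
  move: hE; rewrite /eps; case: (a < s)%N; case: (j < s)%N => //= _;
  by rewrite ?addNr ?addrN.
have hsum' : eps R s a + eps R s j = 0 by rewrite addrC.
apply: big1 => sg _; apply/eqP; rewrite mulf_eq0; apply/orP; right.
have key : forall k l : 'I_m,
  ((sg k == a) && (sg l == j)) || ((sg k == j) && (sg l == a)) ->
  nfac (lam a) sg k l = 0.
  move=> k l /orP [/andP [/eqP hk /eqP hl] | /andP [/eqP hk /eqP hl]];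
  rewrite /nfac hk hl ?La ?Lj subrr ?hsum ?hsum' mul0r iR0 subr0 csinh0 mulr0 //.
set p := (sg^-1)%g a; set q := (sg^-1)%g j.
have sp : sg p = a by rewrite /p permKV.
have sq : sg q = j by rewrite /q permKV.
apply/prodf_eq0.
case: (ltngtP p q) => h.
- exists p => //; apply/prodf_eq0; exists q => //.
  by rewrite key // sp sq !eqxx.
- exists q => //; apply/prodf_eq0; exists p => //.
  by rewrite key // sp sq !eqxx orbT.
- have : a = j by rewrite -sp -sq (val_inj h).
  by move/eqP; rewrite (negbTE ha).
Qed.

Lemma size_Lp c : (size (Lp c) <= 2)%N.
Proof.
rewrite /Lp; apply: (leq_trans (size_polyMleq _ _)).
have hX : size ('X - (cexp (- (2 * c)))%:P) = 2%N by rewrite size_XsubC.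
by rewrite hX addn2 /= ltnS; exact: size_polyC_leq1.
Qed.

Lemma size_shp b c : (size (shp b c) <= (b == j).+1)%N.
Proof.
rewrite /shp; case: eqP => _; first exact: size_Lp.
exact: size_polyC_leq1.
Qed.

Lemma size_shd a b c : a != b -> (size (shd a b c) <= ((b == j) + (a == j)).+1)%N.
Proof.
move=> hab; rewrite /shd; case: (eqVneq b j) => [hb|hb].
  have -> : (a == j) = false by apply/negbTE; rewrite -hb.
  exact: size_Lp.
case: (eqVneq a j) => [ha|ha] /=.
  by rewrite size_polyN; exact: size_Lp.
exact: size_polyC_leq1.
Qed.

Lemma size_mul3 (p1 p2 p3 : {poly C}) n1 n2 n3 :
  (size p1 <= n1.+1)%N -> (size p2 <= n2.+1)%N -> (size p3 <= n3.+1)%N ->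
  (size (p1 * p2 * p3)%R <= (n1 + n2 + n3).+1)%N.
Proof.
move=> h1 h2 h3.
have h12 : (size (p1 * p2)%R <= (n1 + n2).+1)%N.
  by apply: (leq_trans (size_polyMleq _ _)); rewrite -subn1; lia.
by apply: (leq_trans (size_polyMleq _ _)); rewrite -subn1; lia.
Qed.

Lemma size_prod_w (F : 'I_m -> 'I_m -> {poly C}) (w : 'I_m -> 'I_m -> nat) :
  (forall k l : 'I_m, (k < l)%N -> (size (F k l) <= (w k l).+1)%N) ->
  (size (\prod_(k < m) \prod_(l < m | (k < l)%N) F k l)%R
     <= (\sum_(k < m) \sum_(l < m | (k < l)%N) w k l).+1)%N.
Proof.
move=> hF.
pose K := fun (p : {poly C}) (n : nat) => (size p <= n.+1)%N.
have Kmul : forall x1 x2 y1 y2, K x1 x2 -> K y1 y2 -> K (x1 * y1) (x2 + y2)%N.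
  move=> x1 x2 y1 y2; rewrite /K => h1 h2.
  by apply: (leq_trans (size_polyMleq _ _)); rewrite -subn1; lia.
have K1 : K 1 0%N by rewrite /K size_poly1.
apply: (big_ind2 K K1 Kmul) => k _.
apply: (big_ind2 K K1 Kmul) => l hl; exact: hF.
Qed.

Lemma size_Qp sg : (size (Qp sg) <= (2 * m.-1).+1)%N.
Proof.
rewrite -(count2 sg); apply: size_prod_w => k l hkl.
have hne : sg k != sg l.
  by rewrite (inj_eq (@perm_inj _ sg)) -val_eqE /= (ltn_eqF hkl).
have := @size_mul3 _ _ _ _ _ _ (size_shp (sg l) (- xi k + iR (eps R s (sg l) * zeta)))
   (size_shp (sg k) (- xi l - iR (eps R s (sg k) * zeta)))
   (@size_shd (sg k) (sg l) (- iR ((eps R s (sg l) + eps R s (sg k)) * zeta)) hne).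
rewrite /qfac; move/leq_trans; apply; by rewrite mul2n -addnn.
Qed.

Lemma main_sec : (1 <= m)%N -> exists P : {poly C}, (size P <= m)%N /\
  forall z, nonsingular zeta s (lamz z) ->
    cexp ((m - 1)%:R * z) * Gtilde zeta s (lamz z) xi = P.[cexp (2 * z)].
Proof.
move=> hm.
pose N := \sum_(sg : 'S_m) ((-1) ^+ odd_perm sg) *: Qp sg.
have Neval : forall z, \sum_(sg : 'S_m) (-1) ^+ (odd_perm sg) * Tz z sg =
    cexp (- z) ^+ (2 * m.-1) * N.[cexp (2 * z)].
  move=> z; rewrite horner_sum mulr_sumr; apply: eq_bigr => sg _.
  by rewrite hornerZ Tz_eval mulrCA.
have sizeN : (size N <= (2 * m.-1).+1)%N.
  apply: (leq_trans (size_sum _ _ _)); apply/bigmax_leqP => sg _.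
  apply: (leq_trans (size_scale_leq _ _)); exact: size_Qp.
have Vne : forall z, nonsingular zeta s (lamz z) ->
    \prod_(k < m) \prod_(l < m | (k < l)%N) Vf z k l != 0.
  move=> z ns; apply/prodf_neq0 => k _; apply/prodf_neq0 => l hl.
  have hne : k != l by rewrite -val_eqE /= (ltn_eqF hl).
  exact: (ns k l hne).1.
case: (pselect (exists z0, nonsingular zeta s (lamz z0))) => [[z0 ns0]|nons];
  last first.
  exists 0; split; first by rewrite size_poly0.
  by move=> z ns; exfalso; apply: nons; exists z.
pose rs := [seq cexp (2 * lam a) | a <- enum (predC1 j)].
have hroots : all (root N) rs.
  apply/allP => x /mapP [a ha ->]; rewrite /root.
  have haj : a != j by move: ha; rewrite mem_enum.
  have := antisym a haj; rewrite Neval => /eqP; rewrite mulf_eq0 expf_eq0.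
  by rewrite (negbTE (cexp_neq0 _ _)) andbF.
have huniq : uniq_roots rs.
  rewrite uniq_rootsE map_inj_in_uniq ?enum_uniq //.
  move=> a b; rewrite !mem_enum /= => ha hb /eqP; apply: contraTeq => hab.
  have hba : b != a by rewrite eq_sym.
  have := (ns0 b a hba).1; rewrite /lamz (negbTE ha) (negbTE hb).
  exact: csinh_neq0.
have [q hq] := uniq_roots_prod_XsubC hroots huniq.
have sizeD : size (\prod_(x <- rs) ('X - x%:P)) = m.
  rewrite size_prod_XsubC size_map -cardE cardC1 card_ord.
  by case: m hm j.
have hD : \prod_(x <- rs) ('X - x%:P) = Dp.
  by rewrite big_map big_enum.
rewrite hD in hq sizeD.
have Dn0 : Dp != 0 by rewrite -hD monic_neq0 // monic_prod_XsubC.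
have [K hW] := Wp_struct.
have KD : forall z, nonsingular zeta s (lamz z) -> K * Dp.[cexp (2 * z)] != 0.
  move=> z ns; have := Vne z ns; rewrite V_eval hW hornerM hornerC.
  by rewrite mulf_eq0 negb_or => /andP [].
have Kn0 : K != 0.
  by have := KD z0 ns0; rewrite mulf_eq0 negb_or => /andP [].
exists (K^-1 *: q); split.
  apply: (leq_trans (size_scale_leq _ _)).
  case: (eqVneq q 0) => [->|qn0]; first by rewrite size_poly0.
  move: sizeN; rewrite hq size_mul // sizeD -!subn1 mul2n -addnn; set n := size q; set n2 := size q; lia.
move=> z ns.
have hKD := KD z ns.
rewrite Gtilde_eq // Neval V_eval hW hq !(hornerM, hornerC, hornerZ).
rewrite cexp_nat subn1 cexpN mul2n -addnn exprD !exprVn.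
have un0 : cexp z ^+ m.-1 != 0 by rewrite expf_neq0 // cexp_neq0.
move: hKD; rewrite mulf_eq0 negb_or => /andP [_ hDx].
field.
by rewrite un0 Kn0 hDx.

Qed.

End Main.

Theorem lemma3p2 (R : realType) (zeta : R) (m s : nat) (j : 'I_m)
  (lam xi : 'I_m -> R[i]) :
  0 < zeta < pi -> (1 <= m)%N -> (s <= m)%N ->
  exists P : {poly R[i]},
    (size P <= m)%N /\
    forall z : R[i],
      let lam' := fun l : 'I_m => if l == j then z else lam l in
      nonsingular zeta s lam' ->
      cexp ((m - 1)%:R * z) * Gtilde zeta s lam' xi = P.[cexp (2 * z)].
Proof.
move=> _ hm _.
have [P [hP HP]] := @main_sec R zeta m s j lam xi hm.
by exists P; split.
Qed.
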